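(* Let $n\ge 2$, $N=\binom{n}{2}$, and let $F$ be a fundamental basic block with exactly $n$ reducible elements and nullity $\eta(F)=N$ (denoted $\mathrm{CF}(n)$). Let $u_1<u_2<\cdots<u_n$ be its reducible elements. Then $F$ has the adjunct representation $$F = C_0\,]^{u_2}_{u_1}\{c_1\}\,]^{u_3}_{u_1}\{c_2\}\cdots]^{u_n}_{u_1}\{c_{n-1}\}\,]^{u_3}_{u_2}\{c_n\}\cdots]^{u_j}_{u_i}\{c_k\}\cdots]^{u_n}_{u_{n-1}}\{c_N\},$$ in which every adjunct chain is a singleton $\{c_k\}$, the adjunct pairs are exactly the pairs $(u_i,u_j)$ with $1\le i<j\le n$, each occurring once, the pair $(u_i,u_j)$ carrying $\{c_k\}$ with $k=(i-1)n-\binom{i}{2}+j-i$, and $C_0$ is the maximal chain $u_1\prec x_1\prec u_2\prec x_2\prec\cdots\prec u_{n-1}\prec x_{n-1}\prec u_n$, where $x_i\parallel c_k$ for $k=(i-1)n-\binom{i}{2}+1$ (the element attached to the pair $(u_i,u_{i+1})$). Consequently $|F|=2n-1+\binom{n}{2}$, $F$ has $(2n-2)+2\binom{n}{2}$ coverings, and $\eta(F)=\binom n2$.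
   Context: For a finite poset $P$, $a\prec b$ means $b$ covers $a$; the nullity $\eta(P)$ is $|E|-|V|+c$ for the cover graph of $P$ (undirected graph on $P$ with edges the coverings), $c$ its number of components. $x\parallel y$ means $x,y$ incomparable. An element $x$ of a lattice is join-reducible (meet-reducible) if $x=y\vee z$ ($x=y\wedge z$) for some $y,z$ both different from $x$; reducible if join- or meet-reducible. An element of a poset is doubly irreducible if it has at most one upper cover and at most one lower cover. Adjunct operation: for disjoint lattices $L_1,L_2$ and $a<b$ in $L_1$ with $a\not\prec b$, $L_1\,]_a^b\,L_2$ is $L_1\cup L_2$ ordered by: $x\le y$ iff $x\le y$ within $L_1$ or within $L_2$, or $x\in L_1$, $y\in L_2$, $x\le a$, or $x\in L_2$, $y\in L_1$, $b\le y$; $(a,b)$ is the adjunct pair. An RC-lattice is a finite lattice whose reducible elements are pairwise comparable; every RC-lattice is dismantlable and hence an adjunct of chains $C_0\,]_{a_1}^{b_1}C_1\cdots]_{a_r}^{b_r}C_r$ with $C_0$ a maximal chain, the representation being unique up to the order of the adjunct pairs. A poset $B$ is a basic block if it has one element, or has no doubly irreducible elements, or removal of (any) doubly irreducible element from $B$ reduces its nullity by one. A fundamental basic block is an RC-lattice that is a basic block and in whose adjunct representation all adjunct pairs are distinct. *)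

(* Defs.v *)
From HB Require Import structures.
From mathcomp Require Import all_boot all_order all_algebra.
Set Implicit Arguments. Unset Strict Implicit. Unset Printing Implicit Defensive.
Import Order.TTheory GRing.Theory.
Local Open Scope order_scope.

Section Defs.
Context {d : Order.disp_t} {T : finLatticeType d}.

Definition coversIn (S : {set T}) (a b : T) : bool :=
  [&& a \in S, b \in S, a < b & [forall c in S, ~~ ((a < c) && (c < b))]].

Definition covers (a b : T) : bool := coversIn setT a b.

Definition cover_graph (S : {set T}) : rel T :=
  fun x y => coversIn S x y || coversIn S y x.

Definition cover_edges (S : {set T}) : {set T * T} :=
  [set p | coversIn S p.1 p.2].

Definition nullity (S : {set T}) : int :=
  (#|cover_edges S|%:Z - #|S|%:Z + (n_comp (cover_graph S) (mem S))%:Z)%R.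

Definition join_reducible (x : T) : bool :=
  [exists y : T, exists z : T, [&& y != x, z != x & x == y `|` z]].
Definition meet_reducible (x : T) : bool :=
  [exists y : T, exists z : T, [&& y != x, z != x & x == y `&` z]].
Definition reducible (x : T) : bool := join_reducible x || meet_reducible x.

Definition doubly_irreducible_in (S : {set T}) (x : T) : Prop :=
  x \in S /\
  (forall y z, coversIn S x y -> coversIn S x z -> y = z) /\
  (forall y z, coversIn S y x -> coversIn S z x -> y = z).

Definition basic_block_in (S : {set T}) : Prop :=
  #|S| = 1%N \/
  (forall x, ~ doubly_irreducible_in S x) \/
  (forall x, doubly_irreducible_in S x -> nullity (S :\ x) = (nullity S - 1)%R).

Definition RC_lattice : Prop :=
  forall x y : T, reducible x -> reducible y -> x >=< y.

Definition is_lattice_on (S : {set T}) : Prop :=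
  forall x y, x \in S -> y \in S ->
    (exists2 j, j \in S & [/\ x <= j, y <= j &
        forall z, z \in S -> x <= z -> y <= z -> j <= z]) /\
    (exists2 m, m \in S & [/\ m <= x, m <= y &
        forall z, z \in S -> z <= x -> z <= y -> z <= m]).

Definition is_chain (s : seq T) : Prop :=
  forall x y, x \in s -> y \in s -> x >=< y.

Definition maximal_chain (s : seq T) : Prop :=
  is_chain s /\ forall z, z \notin s -> exists2 y, y \in s & ~~ (z >=< y).

(* Adjunct representation  C0 ]_{a1}^{b1} C1 ... ]_{ar}^{br} Cr  of the whole
   lattice T: [steps] is the list of (C_k, (a_k, b_k)).  The k-th step adjoins
   the nonempty chain C_k to L_{k-1} = C0 ∪ C1 ∪ ... ∪ C_{k-1} (itself a lattice)
   at the pair a_k < b_k of L_{k-1}, with a_k not covered by b_k in L_{k-1},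
   and the order of T restricted to L_k is the adjunct order.  The chains
   partition T, and C0 is a maximal chain of T. *)
Definition adjunct_step (L1 : {set T}) (C : seq T) (a b : T) : Prop :=
  [/\ C != [::], is_chain C & is_lattice_on L1] /\
  [/\ a \in L1, b \in L1, a < b & ~~ coversIn L1 a b] /\
  (forall x y, x \in L1 -> y \in C -> (x <= y) = (x <= a)) /\
  (forall x y, x \in L1 -> y \in C -> (y <= x) = (b <= x)).

Definition adjunct_rep (C0 : seq T) (steps : seq (seq T * (T * T))) : Prop :=
  uniq (C0 ++ flatten (map fst steps)) /\
  (forall x : T, x \in C0 ++ flatten (map fst steps)) /\
  maximal_chain C0 /\
  forall s1 C a b s2, steps = s1 ++ (C, (a, b)) :: s2 ->
    adjunct_step [set x in C0 ++ flatten (map fst s1)] C a b.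

Definition fundamental_basic_block : Prop :=
  RC_lattice /\ basic_block_in setT /\
  exists C0 steps, adjunct_rep C0 steps /\ uniq (map snd steps).

End Defs.

Definition lex_pairs (n : nat) : seq (nat * nat) :=
  [seq p <- [seq (i, j) | i <- iota 0 n, j <- iota 0 n] | (p.1 < p.2)%N].

Definition zigzag {A : Type} (n : nat) (u x : nat -> A) : seq A :=
  flatten [seq [:: u i; x i] | i <- iota 0 n.-1] ++ [:: u n.-1].

(* Main.v *)
Require Import Defs.
From mathcomp Require Import all_boot all_order all_algebra.
From mathcomp Require Import zify.
Import Order.TTheory GRing.Theory.
Local Open Scope order_scope.
Set Implicit Arguments. Unset Strict Implicit. Unset Printing Implicit Defensive.

Section Gen.
Context {d : Order.disp_t} {T : finLatticeType d}.
Implicit Types (S : {set T}) (a b c x y z u v w t : T).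

Lemma coversInP S a b :
  reflect [/\ a \in S, b \in S, a < b & forall c, c \in S -> ~~ ((a < c) && (c < b))]
          (coversIn S a b).
Proof.
apply: (iffP and4P) => [[aS bS ab /forall_inP H]|[aS bS ab H]]; split => //.
by apply/forall_inP.
Qed.

Lemma coversP a b :
  reflect (a < b /\ forall c, ~~ ((a < c) && (c < b))) (covers a b).
Proof.
apply: (iffP (coversInP setT a b)) => [[_ _ ab H]|[ab H]]; split => //.
- by move=> c; apply: H; rewrite inE.
Qed.

Lemma covers_lt a b : covers a b -> a < b.
Proof. by case/coversP. Qed.

Lemma covers_coversIn S a b : a \in S -> b \in S -> covers a b -> coversIn S a b.
Proof.
move=> aS bS /coversP [ab H]; apply/coversInP; split => // c _; exact: H.
Qed.

Lemma exists_cover_above S u v : u \in S -> v \in S -> u < v ->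
  exists2 t, coversIn S u t & t <= v.
Proof.
move=> uS.
suff H : forall k v, #|[set t in S | u < t < v]| = k -> v \in S -> u < v ->
  exists2 t, coversIn S u t & t <= v by move=> vS uv; exact: H erefl vS uv.
elim/ltn_ind => k IH {}v Hk vS uv.
case: (boolP [exists t in S, u < t < v]) => [/exists_inP [t tS /andP [ut tv]]|/exists_inP Hn].
- have [t' H1 H2] : exists2 t', coversIn S u t' & t' <= t.
    apply: (IH #|[set t0 in S | u < t0 < t]|) => //.
    rewrite -Hk; apply: proper_card; apply/properP; split.
      apply/subsetP => w; rewrite !inE => /and3P [wS uw wt].
      by rewrite wS uw (lt_trans wt tv).
    by exists t; rewrite !inE ?tS ?ut ?tv ?ltxx ?andbF.
  by exists t' => //; apply: le_trans H2 (ltW tv).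
- exists v => //; apply/coversInP; split => // c cS; apply/negP => H; apply: Hn.
  by exists c.
Qed.

Lemma exists_cover_below S u v : u \in S -> v \in S -> u < v ->
  exists2 t, u <= t & coversIn S t v.
Proof.
move=> uS vS.
suff H : forall k u, #|[set t in S | u < t < v]| = k -> u \in S -> u < v ->
  exists2 t, u <= t & coversIn S t v by move=> uv; exact: H erefl uS uv.
elim/ltn_ind => k IH {}u Hk {}uS uv.
case: (boolP [exists t in S, u < t < v]) => [/exists_inP [t tS /andP [ut tv]]|/exists_inP Hn].
- have [t' H1 H2] : exists2 t', t <= t' & coversIn S t' v.
    apply: (IH #|[set t0 in S | t < t0 < v]|) => //.
    rewrite -Hk; apply: proper_card; apply/properP; split.
      apply/subsetP => w; rewrite !inE => /and3P [wS tw wv].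
      by rewrite wS wv (lt_trans ut tw).
    by exists t; rewrite !inE ?tS ?ut ?tv ?ltxx ?andbF.
  by exists t' => //; apply: le_trans (ltW ut) H1.
- exists u => //; apply/coversInP; split => // c cS; apply/negP => H; apply: Hn.
  by exists c.
Qed.

Lemma cover_graph_sym S : symmetric (cover_graph S).
Proof. by move=> x y; rewrite /cover_graph orbC. Qed.

Lemma n_comp_least S s0 : s0 \in S -> (forall y, y \in S -> s0 <= y) ->
  n_comp (cover_graph S) S = 1%N.
Proof.
move=> s0S Hl.
have csym := sym_connect_sym (cover_graph_sym S).
have conn : forall y, y \in S -> connect (cover_graph S) s0 y.
  suff H : forall k y, #|[set t in S | t < y]| = k -> y \in S ->
      connect (cover_graph S) s0 y by move=> y; exact: H erefl.
  elim/ltn_ind => k IH y Hk yS.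
  case: (eqVneq s0 y) => [<-|ne]; first exact: connect0.
  have lt : s0 < y by rewrite lt_neqAle ne Hl.
  have [t st tc] := exists_cover_below s0S yS lt.
  have tS : t \in S by case/coversInP: tc.
  have tlt : t < y by case/coversInP: tc.
  have ct : connect (cover_graph S) s0 t.
    apply: (IH _ _ t erefl tS).
    rewrite -Hk; apply: proper_card; apply/properP; split.
      apply/subsetP => w; rewrite !inE => /andP [wS wt].
      by rewrite wS (lt_trans wt tlt).
    by exists t; rewrite !inE ?tS ?tlt ?ltxx.
  apply: (connect_trans ct).
  by apply: connect1; rewrite /cover_graph tc.
rewrite -(n_comp_connect csym s0); apply: eq_n_comp_r => y.
apply/idP/idP => [yS|]; first by rewrite inE; exact: conn.
have Hcl : closed (cover_graph S) S.
  move=> a b; rewrite /cover_graph => /orP [] /and4P [aS bS _ _]; by rewrite aS bS.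
by rewrite inE => /(closed_connect Hcl) <-.
Qed.

Lemma exists_least : forall x0 : T, exists b : T, forall y, b <= y.
Proof.
move=> x0.
suff H : forall k x, #|[set t | t < x]| = k -> exists b : T, forall y, b <= y.
  exact: H erefl.
elim/ltn_ind => k IH x Hk.
case: (boolP [forall y, x <= y]) => [/forallP H|]; first by exists x.
rewrite negb_forall => /existsP [y Hy].
have lt : x `&` y < x by rewrite lt_neqAle leIl andbT; apply: contra Hy => /eqP <-; exact: leIr.
apply: (IH #|[set t | t < x `&` y]|) => //.
rewrite -Hk; apply: proper_card; apply/properP; split.
  by apply/subsetP => w; rewrite !inE => wt; exact: lt_trans wt lt.
by exists (x `&` y); rewrite !inE ?lt ?ltxx.
Qed.

Lemma lower_cover_unique_le x p : covers p x ->
  (forall p', covers p' x -> p' = p) -> forall w, w < x -> w <= p.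
Proof.
move=> px Hu w wx.
have [t wt tx] := exists_cover_below (in_setT w) (in_setT x) wx.
by rewrite -(Hu t tx).
Qed.

Lemma upper_cover_unique_le x q : covers x q ->
  (forall q', covers x q' -> q' = q) -> forall w, x < w -> q <= w.
Proof.
move=> px Hu w wx.
have [t tx wt] := exists_cover_above (in_setT x) (in_setT w) wx.
by rewrite -(Hu t tx).
Qed.

Lemma two_lower_join x p q : covers p x -> covers q x -> p != q -> join_reducible x.
Proof.
move=> /coversP [px Hp] /coversP [qx Hq] pq.
apply/existsP; exists p; apply/existsP; exists q.
rewrite (lt_eqF px) (lt_eqF qx) /=.
have le : p `|` q <= x by rewrite leUx (ltW px) (ltW qx).
case: (eqVneq x (p `|` q)) => // ne.
have lt : p `|` q < x by rewrite lt_neqAle le eq_sym ne.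
case: (eqVneq p (p `|` q)) => [E|ne2].
  have : q <= p by rewrite E leUr.
  rewrite le_eqVlt => /orP [/eqP E2|qp]; first by rewrite E2 eqxx in pq.
  by move: (Hq p); rewrite qp px.
by move: (Hp (p `|` q)); rewrite lt lt_neqAle ne2 leUl.
Qed.

Lemma two_upper_meet x p q : covers x p -> covers x q -> p != q -> meet_reducible x.
Proof.
move=> /coversP [px Hp] /coversP [qx Hq] pq.
apply/existsP; exists p; apply/existsP; exists q.
rewrite (gt_eqF px) (gt_eqF qx) /=.
have le : x <= p `&` q by rewrite lexI (ltW px) (ltW qx).
case: (eqVneq x (p `&` q)) => // ne.
have lt : x < p `&` q by rewrite lt_neqAle le ne.
case: (eqVneq p (p `&` q)) => [E|ne2].
  have : p <= q by rewrite E leIr.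
  rewrite le_eqVlt => /orP [/eqP E2|qp]; first by rewrite E2 eqxx in pq.
  by move: (Hq p); rewrite qp px.
by move: (Hp (p `&` q)); rewrite lt lt_neqAle eq_sym ne2 leIl.
Qed.

Lemma notred_DI x : ~~ reducible x -> doubly_irreducible_in setT x.
Proof.
move=> Hr; split; first by rewrite inE.
split => y z Hy Hz; apply/eqP; apply: contraNT Hr => ne.
- by rewrite /reducible (two_upper_meet Hy Hz ne) orbT.
- by rewrite /reducible (two_lower_join Hy Hz ne).
Qed.

Lemma not_covers_between u v : u < v -> ~~ covers u v -> exists t, u < t < v.
Proof.
move=> uv nc; case: (boolP [exists t, u < t < v]) => [/existsP [t Ht]|/existsP Hn].
  by exists t.
case/negP: nc; apply/coversP; split => // c; apply/negP => H; apply: Hn; by exists c.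
Qed.

Lemma not_coversIn_between S u v : u \in S -> v \in S -> u < v -> ~~ coversIn S u v ->
  exists2 t, t \in S & u < t < v.
Proof.
move=> uS vS uv nc; case: (boolP [exists t in S, u < t < v]) => [/exists_inP [t tS Ht]|/exists_inP Hn].
  by exists t.
case/negP: nc; apply/coversInP; split => // c cS; apply/negP => H; apply: Hn; by exists c.
Qed.

Lemma coversIn_del x u v : coversIn (setT :\ x) u v ->
  [/\ u != x, v != x & covers u v \/ (covers u x /\ covers x v)].
Proof.
case/coversInP; rewrite !inE !andbT => ux vx uv H.
split => //.
case: (boolP (covers u v)) => [|nc]; first by left.
right.
have Hb : forall t, u < t -> t < v -> t = x.
  move=> t ut tv; case: (eqVneq t x) => // tx.
  by have := H t; rewrite !inE tx ut tv => /(_ isT).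
have [t /andP [ut tv]] := not_covers_between uv nc.
have E := Hb t ut tv; subst t.
split; apply/coversP; split => // c; apply/negP => /andP [H1 H2].
- by move: (Hb c H1 (lt_trans H2 tv)) => E; rewrite E ltxx in H2.
- by move: (Hb c (lt_trans ut H1) H2) => E; rewrite E ltxx in H1.
Qed.

Lemma covers_del x u v : u != x -> v != x -> covers u v -> coversIn (setT :\ x) u v.
Proof.
by move=> ux vx; apply: covers_coversIn; rewrite !inE ?ux ?vx.
Qed.

Lemma removal x : (1 < #|T|)%N -> doubly_irreducible_in setT x ->
  ~ (exists p q w, [/\ covers p x, covers x q, w != x, p < w & w < q]) ->
  nullity (setT :\ x) = nullity [set: T].
Proof.
move=> T2 [_ [DIu DIl]] Hno.
have [b Hb] := exists_least x.
set E0 := [set e in cover_edges [set: T] | (e.1 != x) && (e.2 != x)].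
have cardS : #|[set: T]| = (#|setT :\ x|).+1 by rewrite (cardsD1 x) inE.
have E0sub : forall e, e \in E0 -> e \in cover_edges (setT :\ x).
  by case=> e1 e2; rewrite !inE /= => /and3P [c e1x e2x]; exact: covers_del.
have E0cov : forall e1 e2, (e1, e2) \in E0 -> covers e1 e2.
  by move=> e1 e2; rewrite !inE => /and3P [].
have nT : n_comp (cover_graph [set: T]) [set: T] = 1%N.
  by apply: (n_comp_least (s0:=b)); rewrite ?inE // => y _; exact: Hb.
rewrite /nullity nT cardS.
have xb_low : (forall p, ~ covers p x) -> x = b.
  move=> nop; apply/eqP; rewrite eq_sym; apply/negP => /negP ne.
  have bx : b < x by rewrite lt_neqAle ne Hb.
  have [t _ tx] := exists_cover_below (in_setT b) (in_setT x) bx.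
  exact: (nop t tx).
case: (boolP [exists p, covers p x]) => [/existsP [p px]|/existsP nop];
case: (boolP [exists q, covers x q]) => [/existsP [q xq]|/existsP noq].
- have px' := covers_lt px; have xq' := covers_lt xq.
  have EE : cover_edges setT = (p,x) |: ((x,q) |: E0).
    apply/setP => [[e1 e2]]; rewrite !inE /= ?xpair_eqE.
    apply/idP/idP => [c|].
    + case: (eqVneq e1 x) => [E|e1x].
        by subst e1; rewrite (DIu _ _ c xq) !eqxx orbT.
      case: (eqVneq e2 x) => [E|e2x].
        by subst e2; rewrite (DIl _ _ c px) !eqxx.
      by rewrite c !orbT.
    + by case/or3P => [/andP [/eqP -> /eqP ->]|/andP [/eqP -> /eqP ->]|/and3P []].
  have EE' : cover_edges (setT :\ x) = (p,q) |: E0.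
    apply/setP => [[e1 e2]]; rewrite in_setU1 xpair_eqE.
    apply/idP/idP => [|/orP [/andP [/eqP -> /eqP ->]|/E0sub //]].
      rewrite inE /= => /coversIn_del [e1x e2x [c|[c1 c2]]].
        by rewrite orbC; apply/orP; left; rewrite !inE /= e1x e2x !andbT; exact: c.
      by rewrite (DIl _ _ c1 px) (DIu _ _ c2 xq) !eqxx.
    rewrite inE /=; apply/coversInP; split.
    + by rewrite !inE (lt_eqF px').
    + by rewrite !inE (gt_eqF xq').
    + exact: lt_trans px' xq'.
    + move=> c; rewrite !inE andbT => cx; apply/negP => /andP [pc cq].
      by apply: Hno; exists p, q, c.
  have bS : b \in setT :\ x.
    rewrite !inE andbT; apply/negP => /eqP E; subst b.
    by move: (lt_le_trans px' (Hb p)); rewrite ltxx.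
  rewrite (n_comp_least bS) ?EE ?EE'; last by move=> y _; exact: Hb.
  have n1 : (p, x) \notin (x, q) |: E0 by rewrite !inE xpair_eqE (lt_eqF px') eqxx !andbF.
  have n2 : (x, q) \notin E0 by rewrite !inE eqxx andbF.
  have n3 : (p, q) \notin E0.
    apply/negP => /E0cov /coversP [_ H]; move: (H x); by rewrite px' xq'.
  rewrite !cardsU1 n1 n2 n3 /=; lia.
- have EE : cover_edges setT = (p,x) |: E0.
    apply/setP => [[e1 e2]]; rewrite !inE /= ?xpair_eqE.
    apply/idP/idP => [c|].
    + case: (eqVneq e1 x) => [E|e1x].
        by subst e1; case: noq; exists e2.
      case: (eqVneq e2 x) => [E|e2x].
        by subst e2; rewrite (DIl _ _ c px) !eqxx.
      by rewrite c !orbT.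
    + by case/orP => [/andP [/eqP -> /eqP ->]|/and3P []].
  have EE' : cover_edges (setT :\ x) = E0.
    apply/setP => [[e1 e2]]; apply/idP/idP => [|/E0sub //].
    rewrite inE /= => /coversIn_del [e1x e2x [c|[c1 c2]]].
      by rewrite !inE /= e1x e2x !andbT; exact: c.
    by case: noq; exists e2.
  have px' := covers_lt px.
  have bS : b \in setT :\ x.
    rewrite !inE andbT; apply/negP => /eqP E; subst b.
    by move: (lt_le_trans px' (Hb p)); rewrite ltxx.
  rewrite (n_comp_least bS) ?EE ?EE'; last by move=> y _; exact: Hb.
  have n2 : (p, x) \notin E0 by rewrite !inE eqxx !andbF.
  rewrite !cardsU1 n2 /=; lia.
- have xb := xb_low (fun p H => nop (ex_intro _ p H)); subst b.
  have xq' := covers_lt xq.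
  have EE : cover_edges setT = (x,q) |: E0.
    apply/setP => [[e1 e2]]; rewrite !inE /= ?xpair_eqE.
    apply/idP/idP => [c|].
    + case: (eqVneq e1 x) => [E|e1x].
        by subst e1; rewrite (DIu _ _ c xq) !eqxx.
      case: (eqVneq e2 x) => [E|e2x].
        by subst e2; case: nop; exists e1.
      by rewrite c !orbT.
    + by case/orP => [/andP [/eqP -> /eqP ->]|/and3P []].
  have EE' : cover_edges (setT :\ x) = E0.
    apply/setP => [[e1 e2]]; apply/idP/idP => [|/E0sub //].
    rewrite inE /= => /coversIn_del [e1x e2x [c|[c1 c2]]].
      by rewrite !inE /= e1x e2x !andbT; exact: c.
    by case: nop; exists e1.
  have qS : q \in setT :\ x by rewrite !inE (gt_eqF xq').
  rewrite (n_comp_least qS) ?EE ?EE'; last first.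
    move=> y; rewrite !inE andbT => yx.
    apply: (upper_cover_unique_le xq) => [q' c|]; first exact: DIu c xq.
    by rewrite lt_neqAle eq_sym yx Hb.
  have n2 : (x, q) \notin E0 by rewrite !inE eqxx !andbF.
  rewrite !cardsU1 n2 /=; lia.
- have xb := xb_low (fun p H => nop (ex_intro _ p H)); subst b.
  exfalso; move: T2; rewrite -cardsT (_ : [set: T] = [set x]) ?cards1 //.
  apply/setP => y; rewrite !inE; apply/esym/eqP.
  apply/eqP; rewrite eq_le Hb andbT; apply/negP => /negP ne.
  have xy : x < y by rewrite lt_neqAle (Hb y) andbT; apply: contra ne => /eqP ->.
  have [t xt _] := exists_cover_above (in_setT x) (in_setT y) xy.
  by apply: noq; exists t.
Qed.

End Gen.

Section Lex.
Local Open Scope nat_scope.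
Lemma mem_lex_pairs n p : (p \in lex_pairs n) = (p.1 < p.2 < n)%N.
Proof.
rewrite /lex_pairs mem_filter; case: p => i j /=.
case ij: (i < j)%N => //=.
apply/flatten_mapP/idP => [[i' Hi /mapP [j' Hj [Ei Ej]]]|jn]; first subst.
  by move: Hj; rewrite mem_iota add0n.
exists i; first by rewrite mem_iota add0n (ltn_trans ij jn).
by apply/mapP; exists j => //; rewrite mem_iota add0n.
Qed.

Lemma uniq_lex_pairs n : uniq (lex_pairs n).
Proof.
rewrite /lex_pairs filter_uniq //; apply: allpairs_uniq; rewrite ?iota_uniq //.
by move=> [a b] [c d] _ _.
Qed.

Lemma count_gt_iota x n : count (fun y => x < y)%N (iota 0 n) = (n - x.+1)%N.
Proof.
elim: n => [//|n IH].
rewrite -[in iota _ _]addn1 iotaD count_cat IH /= add0n addn0.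
case: (ltnP x n) => h; lia.
Qed.

Lemma size_lex_pairs n : size (lex_pairs n) = 'C(n, 2).
Proof.
rewrite /lex_pairs size_filter count_flatten -map_comp.
rewrite (eq_map (g := fun x => (n - x.+1)%N)); last first.
  by move=> x /=; rewrite count_map -count_gt_iota.
rewrite -bin2_sum sumnE big_map.
rewrite big_nat_rev /=.
by rewrite /index_iota subn0; apply: eq_bigr => i _; rewrite add0n.
Qed.

Section Zig.
Variable A : eqType.
Lemma mem_zigzag n (u x : nat -> A) y : (0 < n)%N ->
  (y \in zigzag n u x) = [|| y == u n.-1,
     has (fun i => y == u i) (iota 0 n.-1) | has (fun i => y == x i) (iota 0 n.-1)].
Proof.
move=> n0; rewrite /zigzag mem_cat inE orbC; congr (_ || _).
apply/flatten_mapP/orP => [[i ii]|].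
  rewrite !inE => /orP [/eqP ->|/eqP ->]; [left|right]; apply/hasP; by exists i.
by move=> [] /hasP [i ii /eqP ->]; exists i; rewrite // !inE eqxx ?orbT.
Qed.

Lemma size_zigzag n (u x : nat -> A) : (0 < n)%N -> size (zigzag n u x) = (2 * n - 1)%N.
Proof.
move=> n0; rewrite /zigzag size_cat size_flatten /shape -map_comp /=.
rewrite (eq_map (g := fun _ => 2%N)) //.
have -> : forall s : seq nat, sumn (map (fun _ => 2%N) s) = (2 * size s)%N.
  by elim => //= a s ->; lia.
rewrite size_iota; lia.
Qed.
End Zig.
End Lex.

Section Rep.
Context {d : Order.disp_t} {T : finLatticeType d}.
Implicit Types (S : {set T}) (a b c x y z u v w t : T).
Variables (t0 : T) (C0 : seq T) (steps : seq (seq T * (T * T))).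
Hypothesis Hcover : forall x, x \in C0 ++ flatten (map fst steps).
Hypothesis HC0 : is_chain C0.
Hypothesis Hstep : forall s1 C a b s2, steps = s1 ++ (C, (a, b)) :: s2 ->
  adjunct_step [set x in C0 ++ flatten (map fst s1)] C a b.

Let dflt : seq T * (T * T) := ([::], (t0, t0)).
Definition r := size steps.
Definition ch k := (nth dflt steps k).1.
Definition pa k := (nth dflt steps k).2.1.
Definition pb k := (nth dflt steps k).2.2.
Definition idx x := if x \in C0 then 0%N else (find (fun C => x \in C) (map fst steps)).+1.
Definition L k := [set x in C0 ++ flatten (map fst (take k steps))].

Lemma mem_flatten_has x (ss : seq (seq T)) : (x \in flatten ss) = has (fun C => x \in C) ss.
Proof.
apply/flattenP/hasP => [[s sin xs]|[s sin xs]]; by exists s.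
Qed.

Lemma L_idx k x : (x \in L k) = (idx x <= k)%N.
Proof.
rewrite inE mem_cat /idx; case: ifP => //= xC0.
have hs : has (fun C => x \in C) (map fst steps).
  by move: (Hcover x); rewrite mem_cat xC0 /= mem_flatten_has.
by rewrite mem_flatten_has map_take has_take.
Qed.

Lemma idx_le x : (idx x <= r)%N.
Proof. rewrite /idx; case: ifP => // xC0.
have hs : has (fun C => x \in C) (map fst steps).
  by move: (Hcover x); rewrite mem_cat xC0 /= mem_flatten_has.
by move: hs; rewrite has_find size_map.
Qed.

Lemma step_k k : (k < r)%N -> adjunct_step (L k) (ch k) (pa k) (pb k).
Proof.
move=> kr; apply: (Hstep (s2 := drop k.+1 steps)).
rewrite /ch /pa /pb; case E : (nth dflt steps k) => [C [a b]] /=.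
by rewrite -E -drop_nth ?cat_take_drop.
Qed.

Section K.
Variable k : nat.
Hypothesis kr : (k < r)%N.

Lemma ch_ne : ch k != [::].
Proof. by case: (step_k kr) => [[]]. Qed.
Lemma ch_chain : is_chain (ch k).
Proof. by case: (step_k kr) => [[]]. Qed.
Lemma pa_L : (idx (pa k) <= k)%N.
Proof. by case: (step_k kr) => _ [[]]; rewrite L_idx. Qed.
Lemma pb_L : (idx (pb k) <= k)%N.
Proof. by case: (step_k kr) => _ [[_]]; rewrite L_idx. Qed.
Lemma pa_pb : pa k < pb k.
Proof. by case: (step_k kr) => _ [[]]. Qed.
Lemma pab_ncov : ~~ coversIn (L k) (pa k) (pb k).
Proof. by case: (step_k kr) => _ [[]]. Qed.

Lemma ch_idx x : x \in ch k -> idx x = k.+1.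
Proof.
move=> xC.
have [_ [[_ _ ab _] [H1 H2]]] := step_k kr.
have nL : x \notin L k.
  apply/negP => xL; have := H1 _ _ xL xC; have := H2 _ _ xL xC; rewrite lexx => E1 E2.
  have : pb k <= pa k by apply: (le_trans (esym E1 : pb k <= x)); rewrite -E2.
  by move/(lt_le_trans ab); rewrite ltxx.
have inL : x \in L k.+1.
  rewrite inE (take_nth dflt kr) -cats1 map_cat flatten_cat !mem_cat /=.
  by move: xC; rewrite /ch => ->; rewrite !orbT.
move: nL inL; rewrite !L_idx -ltnNge => H H'; apply/eqP; by rewrite eqn_leq H H'.
Qed.

End K.

Lemma idx_ch x k : idx x = k.+1 -> (k < r)%N /\ x \in ch k.
Proof.
rewrite /idx; case: ifP => // xC0 [E].
have hs : has (fun C => x \in C) (map fst steps).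
  by move: (Hcover x); rewrite mem_cat xC0 /= mem_flatten_has.
split; first by rewrite /r -E -(size_map fst) -has_find.
have := nth_find [::] hs; rewrite E (nth_map dflt) //.
by rewrite -E -(size_map fst) -has_find.
Qed.

Lemma cmp_low k x y : (idx x <= k)%N -> idx y = k.+1 -> (x <= y) = (x <= pa k).
Proof.
move=> xk /idx_ch [kr yC]; have [_ [_ [H1 _]]] := step_k kr.
by apply: H1; rewrite ?L_idx.
Qed.

Lemma cmp_up k x y : (idx x <= k)%N -> idx y = k.+1 -> (y <= x) = (pb k <= x).
Proof.
move=> xk /idx_ch [kr yC]; have [_ [_ [_ H2]]] := step_k kr.
by apply: H2; rewrite ?L_idx.
Qed.

Lemma lt_idx_neq x y : idx x != idx y -> x != y.
Proof. by apply: contra => /eqP ->. Qed.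

Lemma persist j u v : coversIn (L j) u v -> covers u v.
Proof.
move=> /coversInP [uL vL uv H]; apply/coversP; split => // w.
suff K : forall m w, (idx w <= m)%N -> u < w < v -> (idx w <= j)%N.
  apply/negP => Hw; move: (H w); rewrite L_idx (K _ w (leqnn _) Hw).
  by move/(_ isT); rewrite Hw.
elim => [|m IH] {}w.
  by rewrite leqn0 => /eqP ->.
rewrite leq_eqVlt ltnS => /orP [/eqP Em|]; last exact: IH.
move=> /andP [uw wv].
rewrite leqNgt; apply/negP => jm.
rewrite L_idx in uL; rewrite L_idx in vL.
have mr : (m < r)%N by rewrite -ltnS -Em ltnS idx_le.
have um : (idx u <= m)%N by apply: leq_trans uL _; rewrite -ltnS -Em.
have vm : (idx v <= m)%N by apply: leq_trans vL _; rewrite -ltnS -Em.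
have ua : u <= pa m by rewrite -(cmp_low um Em) ltW.
have bv : pb m <= v by rewrite -(cmp_up vm Em) ltW.
have ab := pa_pb mr.
have inner : forall t, (idx t <= m)%N -> u < t < v -> False.
  move=> t tm Ht; move: (H t); rewrite L_idx (IH t tm Ht) => /(_ isT).
  by rewrite Ht.
have Eu : u = pa m.
  apply/eqP; move: ua; rewrite le_eqVlt => /orP [//|ua].
  by case: (inner (pa m) (pa_L mr)); rewrite ua (lt_le_trans ab bv).
have Ev : v = pb m.
  apply/eqP; move: bv; rewrite le_eqVlt eq_sym => /orP [//|bv].
  by case: (inner (pb m) (pb_L mr)); rewrite bv (le_lt_trans ua ab).
case/negP: (pab_ncov mr); rewrite -Eu -Ev; apply/coversInP; split => //.
- by rewrite L_idx.
- by rewrite L_idx.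
- move=> t; rewrite L_idx => tm; apply/negP => Ht; exact: inner tm Ht.
Qed.

Lemma lower_covers_cmp y y' z : covers y z -> covers y' z -> y >=< y' -> y = y'.
Proof.
move=> /coversP [yz Hy] /coversP [y'z Hy'] /orP [|].
- rewrite le_eqVlt => /orP [/eqP //|lt]; by move: (Hy y'); rewrite lt y'z.
- rewrite le_eqVlt => /orP [/eqP //|lt]; by move: (Hy' y); rewrite lt yz.
Qed.

Lemma idx0 y : (idx y == 0)%N = (y \in C0).
Proof. by rewrite /idx; case: ifP. Qed.

Lemma low_parent y z : covers y z -> (idx y <= idx z)%N ->
  (idx z = 0%N /\ y \in C0) \/
  (exists k, [/\ idx z = k.+1, (k < r)%N & (y \in ch k \/ y = pa k)]).
Proof.
move=> c; case E : (idx z) => [|k].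
  by rewrite leqn0 idx0 => yC; left.
move=> yk; right; exists k; have [kr zC] := idx_ch E; split => //.
move: yk; rewrite leq_eqVlt ltnS => /orP [/eqP Ey|yk].
  by left; have [] := idx_ch Ey.
right.
have yz := covers_lt c.
have ya : y <= pa k by rewrite -(cmp_low yk E) ltW.
have az : pa k < z.
  rewrite lt_neqAle (cmp_low (pa_L kr) E) lexx andbT.
  by apply: lt_idx_neq; rewrite E neq_ltn ltnS pa_L.
move: ya; rewrite le_eqVlt => /orP [/eqP //|ya].
by case/coversP: c => _ /(_ (pa k)); rewrite ya az.
Qed.

Lemma E1_inj z y y' : covers y z -> covers y' z -> (idx y <= idx z)%N ->
  (idx y' <= idx z)%N -> y = y'.
Proof.
move=> c c' h h'; apply: (lower_covers_cmp c c').
case: (low_parent c h) => [[E yC]|[k [E kr Hy]]];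
case: (low_parent c' h') => [[E' yC']|[k' [E' kr' Hy']]].
- exact: HC0.
- by rewrite E in E'.
- by rewrite E in E'.
- move: E'; rewrite E => /eqP; rewrite eqSS => /eqP Ek; subst k'.
  case: Hy => [yC|->]; case: Hy' => [yC'|->].
  + exact: (ch_chain kr) yC yC'.
  + by rewrite /Order.comparable (cmp_low (pa_L kr) (ch_idx kr yC)) lexx orbT.
  + by rewrite /Order.comparable (cmp_low (pa_L kr) (ch_idx kr yC')) lexx.
  + by rewrite comparablexx.
Qed.

Lemma high_parent y z : covers y z -> (idx z < idx y)%N ->
  exists k, [/\ idx y = k.+1, (k < r)%N, y \in ch k & z = pb k].
Proof.
move=> c; case E : (idx y) => [//|k] zk.
exists k; have [kr yC] := idx_ch E; split => //.
have yz := covers_lt c.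
have bz : pb k <= z by rewrite -(cmp_up zk E) ltW.
have yb : y < pb k.
  rewrite lt_neqAle (cmp_up (pb_L kr) E) lexx andbT.
  by apply: lt_idx_neq; rewrite E neq_ltn ltnS pb_L ?orbT.
apply/eqP; move: bz; rewrite le_eqVlt eq_sym => /orP [//|bz].
by case/coversP: c => _ /(_ (pb k)); rewrite yb bz.
Qed.

Lemma edge_bound : (#|cover_edges [set: T]| + 1 <= #|T| + r)%N.
Proof.
set E := cover_edges [set: T].
set B := [set e : T * T | (idx e.1 <= idx e.2)%N].
rewrite -(cardsID B E).
have [b Hb] := exists_least t0.
have h1 : (#|E :&: B| < #|T|)%N.
  rewrite -(card_in_imset (f := snd)); last first.
    move=> [y z] [y' z']; rewrite !inE /= => /andP [c h] /andP [c' h'] Ez.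
    subst z'; congr (_, _); exact: E1_inj c c' h h'.
  apply: (@leq_ltn_trans #|~: [set b]|).
    apply: subset_leq_card; apply/subsetP => z /imsetP [[y z'] Hin ->] /=.
    move: Hin; rewrite !inE /= => /andP [/covers_lt c _].
    apply/negP => /eqP Ez; subst z'.
    by move: (lt_le_trans c (Hb y)); rewrite ltxx.
  rewrite cardsC1; have : (0 < #|T|)%N by apply/card_gt0P; exists b.
  by case: #|T|.
have h2 : (#|E :\: B| <= r)%N.
  pose f := fun e : T * T => (inord (idx e.1) : 'I_r.+1).
  have fv : forall e, val (f e) = idx e.1 by move=> e; rewrite /f /= inordK // ltnS idx_le.
  rewrite -(card_in_imset (f := f)); last first.
    move=> [y z] [y' z']; rewrite !inE /= -!ltnNge => /andP [h c] /andP [h' c'] Ef.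
    have Ei : idx y = idx y' by move: (congr1 val Ef); rewrite !fv.
    have [k [Ek kr yC Ez]] := high_parent c h.
    have [k' [Ek' kr' yC' Ez']] := high_parent c' h'.
    have Ekk : k = k' by apply/eqP; rewrite -eqSS -Ek -Ek' Ei.
    subst k'; subst z z'; congr (_, _).
    apply: (lower_covers_cmp c c'); exact: (ch_chain kr) yC yC'.
  apply: (@leq_trans #|~: [set (ord0 : 'I_r.+1)]|); last by rewrite cardsC1 card_ord.
  apply: subset_leq_card; apply/subsetP => i /imsetP [[y z] Hin ->].
  move: Hin; rewrite !inE /= -ltnNge => /andP [h _].
  apply/negP => /eqP /(congr1 val); rewrite fv /= => E0.
  by rewrite E0 in h.
by rewrite addnAC addn1; apply: leq_add.
Qed.

Lemma ch_elem k : (k < r)%N -> exists y, y \in ch k.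
Proof.
move=> kr; have := ch_ne kr; case: (ch k) => [//|y s _]; exists y; by rewrite inE eqxx.
Qed.

Lemma pa_red k : (k < r)%N -> meet_reducible (pa k).
Proof.
move=> kr.
have aL : pa k \in L k by rewrite L_idx pa_L.
have bL : pb k \in L k by rewrite L_idx pb_L.
have [z zL /andP [az zb]] := not_coversIn_between aL bL (pa_pb kr) (pab_ncov kr).
have [y yC] := ch_elem kr.
have Ey := ch_idx kr yC.
rewrite L_idx in zL.
have ay : pa k <= y by rewrite (cmp_low (pa_L kr) Ey).
have Ew : z `&` y = pa k.
  have aw : pa k <= z `&` y by rewrite lexI (ltW az) ay.
  apply/eqP; rewrite eq_le aw andbT.
  case: (ltngtP (idx (z `&` y)) k.+1) => [wk|kw|wk].
  - by rewrite -(cmp_low wk Ey) leIr.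
  - case Em: (idx (z `&` y)) kw => [//|m] kw.
    have mr : (m < r)%N by rewrite -ltnS -Em ltnS idx_le.
    have zm : (idx z <= m)%N by apply: leq_trans zL _; rewrite -ltnS ltnW.
    have ym : (idx y <= m)%N by rewrite Ey.
    have bz : pb m <= z by rewrite -(cmp_up zm Em) leIl.
    have byy : pb m <= y by rewrite -(cmp_up ym Em) leIr.
    have bw : pb m <= z `&` y by rewrite lexI bz byy.
    have wb : z `&` y < pb m.
      rewrite lt_neqAle (cmp_up (pb_L mr) Em) lexx andbT.
      by apply: lt_idx_neq; rewrite Em neq_ltn ltnS pb_L ?orbT.
    by move: (lt_le_trans wb bw); rewrite ltxx.
  - have : z `&` y <= z by rewrite leIl.
    rewrite (cmp_up zL wk) => bz.
    by move: (lt_le_trans zb bz); rewrite ltxx.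
apply/existsP; exists z; apply/existsP; exists y.
rewrite (gt_eqF az) /= Ew eqxx andbT.
by rewrite eq_sym; apply: lt_idx_neq; rewrite Ey neq_ltn ltnS pa_L.
Qed.

Lemma pb_red k : (k < r)%N -> join_reducible (pb k).
Proof.
move=> kr.
have aL : pa k \in L k by rewrite L_idx pa_L.
have bL : pb k \in L k by rewrite L_idx pb_L.
have [z zL /andP [az zb]] := not_coversIn_between aL bL (pa_pb kr) (pab_ncov kr).
have [y yC] := ch_elem kr.
have Ey := ch_idx kr yC.
rewrite L_idx in zL.
have yb : y <= pb k by rewrite (cmp_up (pb_L kr) Ey).
have Ew : z `|` y = pb k.
  have wb : z `|` y <= pb k by rewrite leUx (ltW zb) yb.
  apply/eqP; rewrite eq_le wb /=.
  case: (ltngtP (idx (z `|` y)) k.+1) => [wk|kw|wk].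
  - by rewrite -(cmp_up wk Ey) leUr.
  - case Em: (idx (z `|` y)) kw => [//|m] kw.
    have mr : (m < r)%N by rewrite -ltnS -Em ltnS idx_le.
    have zm : (idx z <= m)%N by apply: leq_trans zL _; rewrite -ltnS ltnW.
    have ym : (idx y <= m)%N by rewrite Ey.
    have za : z <= pa m by rewrite -(cmp_low zm Em) leUl.
    have ya : y <= pa m by rewrite -(cmp_low ym Em) leUr.
    have wa : z `|` y <= pa m by rewrite leUx za ya.
    have aw : pa m < z `|` y.
      rewrite lt_neqAle (cmp_low (pa_L mr) Em) lexx andbT.
      by apply: lt_idx_neq; rewrite Em neq_ltn ltnS pa_L.
    by move: (lt_le_trans aw wa); rewrite ltxx.
  - have : z <= z `|` y by rewrite leUl.
    rewrite (cmp_low zL wk) => za.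
    by move: (lt_le_trans az za); rewrite ltxx.
apply/existsP; exists z; apply/existsP; exists y.
rewrite (lt_eqF zb) /= Ew eqxx andbT.
by rewrite eq_sym; apply: lt_idx_neq; rewrite Ey neq_ltn ltnS pb_L.
Qed.

Variable n : nat.
Hypothesis n2 : (2 <= n)%N.
Hypothesis HRC : @RC_lattice d T.
Hypothesis HBB : basic_block_in [set: T].
Hypothesis Huniq : uniq (map snd steps).
Hypothesis Hn : #|[set x : T | reducible x]| = n.
Hypothesis Hnull : nullity [set: T] = Posz 'C(n, 2).

Definition us : seq T := sort <=%O (enum [set x : T | reducible x]).
Definition uu i := nth t0 us i.

Lemma size_us : size us = n.
Proof. by rewrite size_sort -cardE. Qed.

Lemma mem_us y : (y \in us) = reducible y.
Proof. by rewrite mem_sort mem_enum inE. Qed.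

Lemma us_sorted : sorted <%O us.
Proof.
rewrite lt_sorted_uniq_le sort_uniq enum_uniq /=.
apply: (sort_sorted_in (P := mem [set x : T | reducible x])).
  by move=> a b; rewrite !inE => ra rb; apply: HRC.
by apply/allP => y; rewrite mem_enum.
Qed.

Lemma uu_lt i j : (i < j)%N -> (j < n)%N -> uu i < uu j.
Proof.
move=> ij jn.
have H := sorted_ltn_nth lt_trans t0 us_sorted.
apply: H; [change (i < size (us : seq T))%N|change (j < size (us : seq T))%N|]; rewrite ?size_us //.
exact: (ltn_trans ij jn).
Qed.

Lemma uu_R i : (i < n)%N -> reducible (uu i).
Proof. by move=> iN; rewrite -mem_us mem_nth // size_us. Qed.

Lemma R_uu y : reducible y -> exists2 i, (i < n)%N & y = uu i.
Proof.
rewrite -mem_us => yu; exists (index y us).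
  have := index_mem y us; rewrite yu size_us; done.
by rewrite /uu nth_index.
Qed.

Lemma uu_ltE i j : (i < n)%N -> (j < n)%N -> (uu i < uu j) = (i < j)%N.
Proof.
move=> iN jN; case: (ltngtP i j) => [ij|ji|->]; first by rewrite uu_lt.
- by apply/negbTE; rewrite lt_gtF // uu_lt.
- by rewrite ltxx.
Qed.

Lemma uu_leE i j : (i < n)%N -> (j < n)%N -> (uu i <= uu j) = (i <= j)%N.
Proof.
move=> iN jN; case: (ltngtP i j) => [ij|ji|->]; first by rewrite ltW // uu_lt.
- by apply/negbTE; rewrite lt_geF // uu_lt.
- by rewrite lexx.
Qed.

Lemma uu_inj i j : (i < n)%N -> (j < n)%N -> uu i = uu j -> i = j.
Proof.
move=> iN jN E; apply/eqP; by rewrite eqn_leq -(uu_leE iN jN) -(uu_leE jN iN) E lexx.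
Qed.

Let rr := r.

Definition Pset := [set p : T * T | [&& reducible p.1, reducible p.2 & p.1 < p.2]].

Lemma card_Pset : #|Pset| = 'C(n, 2).
Proof.
set s := [seq (uu p.1, uu p.2) | p <- lex_pairs n].
have us_ : uniq s.
  rewrite map_inj_in_uniq; first exact: uniq_lex_pairs.
  move=> [i j] [i' j'].
  rewrite !mem_lex_pairs /= => /andP [ij jn] /andP [ij' jn'] [E1 E2].
  have iN := ltn_trans ij jn; have iN' := ltn_trans ij' jn'.
  by rewrite (uu_inj iN iN' E1) (uu_inj jn jn' E2).
rewrite -size_lex_pairs -(size_map (fun p => (uu p.1, uu p.2))) -/s.
rewrite -(card_uniqP us_); apply: eq_card => [[a b]].
rewrite inE /=; apply/and3P/mapP => [[ra rb ab]|[[i j]]].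
  have [i iN Ea] := R_uu ra; have [j jN Eb] := R_uu rb; subst a b.
  by exists (i, j) => //; rewrite mem_lex_pairs /= jN andbT -(uu_ltE iN jN).
rewrite mem_lex_pairs /= => /andP [ij jn] [-> ->].
have iN := ltn_trans ij jn.
by split; rewrite ?uu_R ?uu_lt.
Qed.

Lemma steps_nth k : (k < rr)%N -> nth dflt steps k = (ch k, (pa k, pb k)).
Proof. by rewrite /ch /pa /pb; case: (nth dflt steps k) => [C [a b]]. Qed.

Lemma snd_in_Pset p : p \in map snd steps -> p \in Pset.
Proof.
case/mapP => s /(nthP dflt) [k kr <-] ->.
rewrite steps_nth // inE /=.
by rewrite /reducible (pa_red kr) (pb_red kr) (pa_pb kr) orbT.
Qed.

Lemma nullityT : nullity [set: T] =
  (#|cover_edges [set: T]|%:Z - #|T|%:Z + 1)%R.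
Proof.
have [b Hb] := exists_least t0.
rewrite /nullity (n_comp_least (s0 := b)) ?cardsT ?inE // => y _; exact: Hb.
Qed.

Lemma rr_eq : rr = 'C(n, 2).
Proof.
apply/eqP; rewrite eqn_leq; apply/andP; split.
  rewrite /rr /r -card_Pset -(size_map snd) -(card_uniqP Huniq).
  by apply: subset_leq_card; apply/subsetP => p; exact: snd_in_Pset.
have eb := edge_bound; have := Hnull; rewrite nullityT => H.
rewrite /rr; lia.
Qed.

Lemma all_pairs a b : reducible a -> reducible b -> a < b ->
  exists2 k, (k < rr)%N & pa k = a /\ pb k = b.
Proof.
move=> ra rb ab.
have E : map snd steps =i Pset.
  apply/subset_cardP; last by apply/subsetP => p; exact: snd_in_Pset.
  by rewrite (card_uniqP Huniq) size_map card_Pset -rr_eq.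
have : (a, b) \in map snd steps by rewrite E inE /= ra rb ab.
case/mapP => s /(nthP dflt) [k kr Es] Eab; exists k => //.
by move: Eab; rewrite -Es steps_nth // => -[-> ->].
Qed.

Lemma pa_R k : (k < rr)%N -> reducible (pa k).
Proof. by move=> kr; rewrite /reducible pa_red ?orbT. Qed.
Lemma pb_R k : (k < rr)%N -> reducible (pb k).
Proof. by move=> kr; rewrite /reducible pb_red. Qed.

Lemma no_RR_cover a b : covers a b -> reducible a -> reducible b -> False.
Proof.
move=> c ra rb; have [k kr [Ea Eb]] := all_pairs ra rb (covers_lt c).
case/negP: (pab_ncov kr); rewrite Ea Eb; apply: covers_coversIn => //.
- by rewrite -Ea L_idx pa_L.
- by rewrite -Eb L_idx pb_L.
Qed.

Lemma T_gt1 : (1 < #|T|)%N.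
Proof.
apply: (leq_trans n2); rewrite -Hn; exact: max_card.
Qed.

Lemma HBB3 x : doubly_irreducible_in setT x ->
  nullity (setT :\ x) = (nullity [set: T] - 1)%R.
Proof.
case: HBB => [H1|[H2|H3]]; last exact: H3.
- by move: T_gt1; rewrite -cardsT H1.
- move=> _; exfalso.
  have allR : forall y, reducible y.
    by move=> y; apply/negPn/negP => /notred_DI; apply: H2.
  have : reducible t0 := allR t0.
  case/orP => /existsP [y /existsP [z /and3P [yx zx /eqP E]]].
  + case/orP: (HRC (allR y) (allR z)) => le.
    * by move: zx; rewrite E (join_r le) eqxx.
    * by move: yx; rewrite E (join_l le) eqxx.
  + case/orP: (HRC (allR y) (allR z)) => le.
    * by move: yx; rewrite E (meet_l le) eqxx.
    * by move: zx; rewrite E (meet_r le) eqxx.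
Qed.

Lemma BBz z : ~~ reducible z ->
  exists p q w, [/\ covers p z, covers z q, w != z, p < w & w < q].
Proof.
move=> nz.
case: (boolP [exists p, exists q, exists w,
    [&& covers p z, covers z q, w != z, p < w & w < q]]).
  case/existsP => p /existsP [q /existsP [w /and5P [H1 H2 H3 H4 H5]]].
  by exists p, q, w.
move=> Hn'; exfalso.
have E1 := HBB3 (notred_DI nz).
have E2 : nullity (setT :\ z) = nullity [set: T].
  apply: removal T_gt1 (notred_DI nz) _.
  move=> [p [q [w [H1 H2 H3 H4 H5]]]]; case/negP: Hn'.
  apply/existsP; exists p; apply/existsP; exists q; apply/existsP; exists w.
  by rewrite H1 H2 H3 H4 H5.
move: E1; rewrite E2; lia.
Qed.

Lemma lowU z p p' : ~~ reducible z -> covers p z -> covers p' z -> p = p'.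
Proof. by move=> /notred_DI [_ [_ H]]; apply: H. Qed.
Lemma upU z q q' : ~~ reducible z -> covers z q -> covers z q' -> q = q'.
Proof. by move=> /notred_DI [_ [H _]]; apply: H. Qed.

Lemma lo_ex z : ~~ reducible z -> exists p, covers p z.
Proof. by move=> /BBz [p [q [w [H _ _ _ _]]]]; exists p. Qed.
Lemma hi_ex z : ~~ reducible z -> exists q, covers z q.
Proof. by move=> /BBz [p [q [w [_ H _ _ _]]]]; exists q. Qed.

Lemma Dle z p w : ~~ reducible z -> covers p z -> w != z -> (w <= z) = (w <= p).
Proof.
move=> nz pz wz; apply/idP/idP => [wle|wp].
  apply: (lower_cover_unique_le pz) => [p' c|]; first exact: lowU nz c pz.
  by rewrite lt_neqAle wz.
exact: le_trans wp (ltW (covers_lt pz)).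
Qed.

Lemma Dge z q w : ~~ reducible z -> covers z q -> w != z -> (z <= w) = (q <= w).
Proof.
move=> nz zq wz; apply/idP/idP => [zle|qw].
  apply: (upper_cover_unique_le zq) => [q' c|]; first exact: upU nz c zq.
  by rewrite lt_neqAle eq_sym wz.
exact: le_trans (ltW (covers_lt zq)) qw.
Qed.

Lemma lo_R z p : ~~ reducible z -> covers p z -> reducible p.
Proof.
move=> nz pz; apply/negPn/negP => np.
have [p' [q' [w [c1 c2 wp p'w wq']]]] := BBz np.
have Eq := upU np c2 pz; subst q'.
have wle : w <= p by rewrite -(Dle nz pz (negbT (lt_eqF wq'))) ltW.
have wlt : w < p by rewrite lt_neqAle wp.
by case/coversP: c1 => _ /(_ w); rewrite p'w wlt.
Qed.

Lemma hi_R z q : ~~ reducible z -> covers z q -> reducible q.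
Proof.
move=> nz zq; apply/negPn/negP => nq.
have [p' [q' [w [c1 c2 wq p'w wq']]]] := BBz nq.
have Ep := lowU nq c1 zq; subst p'.
have wle : q <= w by rewrite -(Dge nz zq (negbT (gt_eqF p'w))) ltW.
have wlt : q < w by rewrite lt_neqAle eq_sym wq.
by case/coversP: c2 => _ /(_ w); rewrite wq' wlt.
Qed.

Lemma idx_cover_nonred z v : covers z v -> ~~ reducible z -> (idx v <= idx z)%N.
Proof.
move=> c nz; rewrite leqNgt; apply/negP => lt.
case Ev: (idx v) lt => [//|m] lt.
have mr : (m < r)%N by rewrite -ltnS -Ev ltnS idx_le.
have zm : (idx z <= m)%N by [].
have za : z <= pa m by rewrite -(cmp_low zm Ev) ltW // (covers_lt c).
have av : pa m < v.
  rewrite lt_neqAle (cmp_low (pa_L mr) Ev) lexx andbT.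
  by apply: lt_idx_neq; rewrite Ev neq_ltn ltnS pa_L.
have zne : z != pa m by apply: contraNneq nz => ->; exact: pa_R.
have zlt : z < pa m by rewrite lt_neqAle zne za.
by case/coversP: c => _ /(_ (pa m)); rewrite zlt av.
Qed.

Lemma Dab a b : reducible a -> reducible b -> a < b ->
  exists z, [/\ ~~ reducible z, covers a z & covers z b].
Proof.
move=> ra rb ab; have [k kr [Ea Eb]] := all_pairs ra rb ab; subst a b.
have aL : pa k \in L k by rewrite L_idx pa_L.
have bL : pb k \in L k by rewrite L_idx pb_L.
have [z0 z0L /andP [az0 z0b]] := not_coversIn_between aL bL (pa_pb kr) (pab_ncov kr).
have [w1 cov1 w1z0] := exists_cover_above aL z0L az0.
have cw1 := persist cov1.
have w1L : w1 \in L k by case/coversInP: cov1.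
have [y yC] := ch_elem kr.
have Ey := ch_idx kr yC.
have aL1 : pa k \in L k.+1 by rewrite L_idx (leq_trans (pa_L kr)).
have yL1 : y \in L k.+1 by rewrite L_idx Ey.
have ay : pa k < y.
  rewrite lt_neqAle (cmp_low (pa_L kr) Ey) lexx andbT.
  by apply: lt_idx_neq; rewrite Ey neq_ltn ltnS pa_L.
have yb : y < pb k.
  rewrite lt_neqAle (cmp_up (pb_L kr) Ey) lexx andbT.
  by apply: lt_idx_neq; rewrite Ey neq_ltn ltnS pb_L ?orbT.
have [y1 cov2 y1y] := exists_cover_above aL1 yL1 ay.
have cy1 := persist cov2.
have Ey1 : idx y1 = k.+1.
  have : y1 \in L k.+1 by case/coversInP: cov2.
  rewrite L_idx leq_eqVlt ltnS => /orP [/eqP //|y1k].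
  have : y1 <= pa k by rewrite -(cmp_low y1k Ey).
  by move/(lt_le_trans (covers_lt cy1)); rewrite ltxx.
have nw1 : ~~ reducible w1.
  by apply/negP => rw1; apply: (no_RR_cover cw1) => //; exact: pa_R.
have ny1 : ~~ reducible y1.
  by apply/negP => ry1; apply: (no_RR_cover cy1) => //; exact: pa_R.
have [q1 c1] := hi_ex nw1; have [q2 c2] := hi_ex ny1.
have w1b : w1 < pb k := le_lt_trans w1z0 z0b.
have y1b : y1 < pb k := le_lt_trans y1y yb.
have q1b : q1 <= pb k by rewrite -(Dge nw1 c1 (negbT (gt_eqF w1b))) ltW.
have q2b : q2 <= pb k by rewrite -(Dge ny1 c2 (negbT (gt_eqF y1b))) ltW.
case: (eqVneq q1 (pb k)) => [E1|ne1]; first by exists w1; rewrite -E1.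
case: (eqVneq q2 (pb k)) => [E2|ne2]; first by exists y1; rewrite -E2.
have q1lt : q1 < pb k by rewrite lt_neqAle ne1.
have q2lt : q2 < pb k by rewrite lt_neqAle ne2.
have iq1 : (idx q1 <= k)%N.
  by apply: leq_trans (idx_cover_nonred c1 nw1) _; rewrite -L_idx.
have iq2 : idx q2 = k.+1.
  move: (idx_cover_nonred c2 ny1); rewrite Ey1 leq_eqVlt ltnS => /orP [/eqP //|q2k].
  have : y1 <= q2 by rewrite ltW // (covers_lt c2).
  rewrite (cmp_up q2k Ey1) => bq2.
  by move: (lt_le_trans q2lt bq2); rewrite ltxx.
have rq1 := hi_R nw1 c1; have rq2 := hi_R ny1 c2.
have aq1 : pa k < q1 := lt_trans (covers_lt cw1) (covers_lt c1).
case/orP: (HRC rq1 rq2) => le.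
- move: le; rewrite (cmp_low iq1 iq2) => q1a.
  by move: (lt_le_trans aq1 q1a); rewrite ltxx.
- move: le; rewrite (cmp_up iq1 iq2) => bq1.
  by move: (lt_le_trans q1lt bq1); rewrite ltxx.
Qed.

Definition cc i j := odflt t0 [pick z | [&& ~~ reducible z, covers (uu i) z & covers z (uu j)]].
Definition xx i := odflt t0 [pick z | [&& ~~ reducible z, covers (uu i) z,
  covers z (uu i.+1) & z != cc i i.+1]].

Lemma cc_spec i j : (i < j)%N -> (j < n)%N ->
  [/\ ~~ reducible (cc i j), covers (uu i) (cc i j) & covers (cc i j) (uu j)].
Proof.
move=> ij jn; rewrite /cc; case: pickP => [z /and3P [] //|H]; exfalso.
have iN := ltn_trans ij jn.
have [z [H1 H2 H3]] := Dab (uu_R iN) (uu_R jn) (uu_lt ij jn).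
by move: (H z); rewrite H1 H2 H3.
Qed.

Lemma xx_spec i : (i.+1 < n)%N ->
  [/\ ~~ reducible (xx i), covers (uu i) (xx i), covers (xx i) (uu i.+1) & xx i != cc i i.+1].
Proof.
move=> iN; rewrite /xx; case: pickP => [z /and4P [] //|H]; exfalso.
have iN' := ltnW iN.
have [nc c1 c2] := cc_spec (ltnSn i) iN.
have [p [q [w [d1 d2 wc pw wq]]]] := BBz nc.
have Ep := lowU nc d1 c1; have Eq := upU nc d2 c2; subst p q.
have nw : ~~ reducible w.
  apply/negP => /R_uu [k kN Ek]; subst w.
  move: pw wq; rewrite !uu_ltE // => ik ki; lia.
have [p' cp'] := lo_ex nw; have [q' cq'] := hi_ex nw.
have [k kN Ek] := R_uu (lo_R nw cp'); subst p'.
have [k' kN' Ek'] := R_uu (hi_R nw cq'); subst q'.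
have h1 : uu i <= uu k by rewrite -(Dle nw cp' (negbT (lt_eqF pw))) ltW.
have h2 : uu k < uu i.+1 := lt_trans (covers_lt cp') wq.
have h3 : uu k' <= uu i.+1 by rewrite -(Dge nw cq' (negbT (gt_eqF wq))) ltW.
have h4 : uu i < uu k' := lt_trans pw (covers_lt cq').
move: h1 h2 h3 h4; rewrite uu_leE // uu_ltE // uu_leE // uu_ltE // => h1 h2 h3 h4.
have Ek : k = i by lia.
have Ek' : k' = i.+1 by lia.
subst k k'.
by move: (H w); rewrite nw cp' cq' wc.
Qed.

Definition cs := [seq cc p.1 p.2 | p <- lex_pairs n].
Definition xs := [seq xx i | i <- iota 0 n.-1].

Lemma cc_inj i j i' j' : (i < j < n)%N -> (i' < j' < n)%N -> cc i j = cc i' j' -> i = i' /\ j = j'.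
Proof.
move=> /andP [ij jn] /andP [ij' jn'] E.
have [m1 a1 b1] := cc_spec ij jn; have [m2 a2 b2] := cc_spec ij' jn'.
rewrite E in m1 a1 b1.
split; apply: uu_inj.
- exact: ltn_trans ij jn.
- exact: ltn_trans ij' jn'.
- exact: lowU m1 a1 a2.
- exact: jn.
- exact: jn'.
- exact: upU m1 b1 b2.
Qed.

Lemma uniq_csxs : uniq (cs ++ xs).
Proof.
rewrite cat_uniq; apply/and3P; split.
- rewrite map_inj_in_uniq; first exact: uniq_lex_pairs.
  move=> [i j] [i' j']; rewrite !mem_lex_pairs /= => h h' E.
  by have [-> ->] := cc_inj h h' E.
- apply/hasPn => y /mapP [i]; rewrite mem_iota add0n => /andP [_ iN] ->.
  have iN' : (i.+1 < n)%N by lia.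
  apply/negP => /mapP [[a b]]; rewrite mem_lex_pairs /= => h E.
  have [nx x1 x2 xc] := xx_spec iN'.
  have [n1 a1 b1] := cc_spec (ltnSn i) iN'.
  case/andP: h => ab bn.
  have [nc c1 c2] := cc_spec ab bn.
  rewrite E in nx x1 x2.
  have Ea : uu i = uu a := lowU nc x1 c1.
  have Eb : uu i.+1 = uu b := upU nc x2 c2.
  have ia := uu_inj (ltnW iN') (ltn_trans ab bn) Ea.
  have ib := uu_inj iN' bn Eb.
  by subst a b; rewrite E eqxx in xc.
- rewrite map_inj_in_uniq; first exact: iota_uniq.
  move=> i i'; rewrite !mem_iota !add0n => /andP [_ iN] /andP [_ iN'] E.
  have iN1 : (i.+1 < n)%N by lia.
  have iN1' : (i'.+1 < n)%N by lia.
  have [nx x1 _ _] := xx_spec iN1; have [_ x1' _ _] := xx_spec iN1'.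
  rewrite E in nx x1.
  exact: uu_inj (ltnW iN1) (ltnW iN1') (lowU nx x1 x1').
Qed.

Lemma csxs_D y : y \in cs ++ xs -> ~~ reducible y.
Proof.
rewrite mem_cat => /orP [/mapP [[i j]]|/mapP [i]].
- by rewrite mem_lex_pairs /= => /andP [ij jn] ->; case: (cc_spec ij jn).
- rewrite mem_iota add0n => /andP [_ iN] ->.
  have iN1 : (i.+1 < n)%N by lia.
  by case: (xx_spec iN1).
Qed.

Definition lo y := odflt t0 [pick p | covers p y].
Definition hi y := odflt t0 [pick q | covers y q].

Lemma lo_spec y : ~~ reducible y -> covers (lo y) y.
Proof.
move=> ny; rewrite /lo; case: pickP => [p //|H].
by have [p cp] := lo_ex ny; move: (H p); rewrite cp.
Qed.
Lemma hi_spec y : ~~ reducible y -> covers y (hi y).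
Proof.
move=> ny; rewrite /hi; case: pickP => [p //|H].
by have [p cp] := hi_ex ny; move: (H p); rewrite cp.
Qed.

Definition DD := [set y : T | ~~ reducible y].

Lemma cover_edges_D : cover_edges [set: T] =
  [set (lo y, y) | y in DD] :|: [set (y, hi y) | y in DD].
Proof.
apply/setP => [[a b]]; rewrite inE /=; apply/idP/idP => [c|].
  case: (boolP (reducible b)) => rb.
    case: (boolP (reducible a)) => ra; first by case: (no_RR_cover c ra rb).
    rewrite in_setU; apply/orP; right; apply/imsetP; exists a; rewrite ?inE //.
    by rewrite (upU ra c (hi_spec ra)).
  rewrite in_setU; apply/orP; left; apply/imsetP; exists b; rewrite ?inE //.
  by rewrite (lowU rb c (lo_spec rb)).
rewrite in_setU => /orP [] /imsetP [y]; rewrite inE => ny [-> ->].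
- exact: lo_spec.
- exact: hi_spec.
Qed.

Lemma card_edges : #|cover_edges [set: T]| = (#|DD| + #|DD|)%N.
Proof.
rewrite cover_edges_D cardsU.
have -> : [set (lo y, y) | y in DD] :&: [set (y, hi y) | y in DD] = set0.
  apply/setP => [[a b]]; rewrite !inE; apply/negP => /andP [/imsetP [y yD E1] /imsetP [z zD E2]].
  move: yD zD; rewrite !inE => ny nz.
  case: E1 => Ea Eb; case: E2 => Ea' Eb'.
  have Eyz : y = hi z by rewrite -Eb Eb'.
  by move: (hi_R nz (hi_spec nz)); rewrite -Eyz (negbTE ny).
rewrite cards0 subn0 !card_in_imset //.
- by move=> y z _ _ [].
- by move=> y z _ _ [].
Qed.

Lemma card_T : #|T| = (n + #|DD|)%N.
Proof.
rewrite -Hn -(cardsC [set x : T | reducible x]); congr (_ + _)%N.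
by apply: eq_card => y; rewrite !inE.
Qed.

Lemma card_DD : #|DD| = ('C(n, 2) + n.-1)%N.
Proof.
have := Hnull; rewrite nullityT card_edges card_T => H.
have n1 : (0 < n)%N by lia.
lia.
Qed.

Lemma D_csxs y : ~~ reducible y -> y \in cs ++ xs.
Proof.
move=> ny.
have E : (cs ++ xs) =i DD.
  apply/subset_cardP.
    rewrite (card_uniqP uniq_csxs) card_DD size_cat !size_map size_lex_pairs size_iota //.
  by apply/subsetP => z /csxs_D; rewrite inE.
by rewrite E inE.
Qed.

Lemma lattice_on_R S : (forall y, reducible y -> y \in S) -> is_lattice_on S.
Proof.
move=> HS x y xS yS; split.
- exists (x `|` y); last by split; rewrite ?leUl ?leUr // => z _; rewrite leUx => -> ->.
  case: (eqVneq (x `|` y) x) => [->//|n1]; case: (eqVneq (x `|` y) y) => [->//|n2'].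
  apply: HS; apply/orP; left; apply/existsP; exists x; apply/existsP; exists y.
  by rewrite eq_sym n1 eq_sym n2' eqxx.
- exists (x `&` y); last by split; rewrite ?leIl ?leIr // => z _; rewrite lexI => -> ->.
  case: (eqVneq (x `&` y) x) => [->//|n1]; case: (eqVneq (x `&` y) y) => [->//|n2'].
  apply: HS; apply/orP; right; apply/existsP; exists x; apply/existsP; exists y.
  by rewrite eq_sym n1 eq_sym n2' eqxx.
Qed.

Lemma D_incomp z z' p q : ~~ reducible z -> ~~ reducible z' -> covers p z -> covers z q ->
  covers p z' -> covers z' q -> z != z' -> ~~ (z >=< z').
Proof.
move=> nz nz' pz zq pz' z'q ne; have ne' : z' != z by rewrite eq_sym.
rewrite /Order.comparable (Dle nz' pz' ne) (Dle nz pz ne').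
by rewrite !lt_geF ?(covers_lt pz) ?(covers_lt pz').
Qed.

Definition Z := zigzag n uu xx.

Lemma Z_uu i : (i < n)%N -> uu i \in Z.
Proof.
move=> iN; rewrite /Z mem_zigzag; last by lia.
case: (ltnP i n.-1) => h.
  by apply/orP; right; apply/orP; left; apply/hasP; exists i; rewrite ?mem_iota ?add0n ?h.
have -> : i = n.-1 by lia.
by rewrite eqxx.
Qed.

Lemma Z_xx i : (i.+1 < n)%N -> xx i \in Z.
Proof.
move=> iN; rewrite /Z mem_zigzag; last by lia.
apply/orP; right; apply/orP; right; apply/hasP; exists i => //.
rewrite mem_iota add0n; lia.
Qed.

Lemma Z_inv y : y \in Z ->
  (exists2 i, (i < n)%N & y = uu i) \/ (exists2 i, (i.+1 < n)%N & y = xx i).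
Proof.
rewrite /Z mem_zigzag; last by lia.
case/or3P => [/eqP ->|/hasP [i]|/hasP [i]].
- by left; exists n.-1 => //; lia.
- rewrite mem_iota add0n => /andP [_ h] /eqP ->; left; exists i => //; lia.
- rewrite mem_iota add0n => /andP [_ h] /eqP ->; right; exists i => //; lia.
Qed.

Lemma cmp_uu_xx i j : (i < n)%N -> (j.+1 < n)%N -> uu i >=< xx j.
Proof.
move=> iN jN; have [_ c1 c2 _] := xx_spec jN.
case: (leqP i j) => h.
  apply/orP; left; apply: le_trans (ltW (covers_lt c1)).
  by rewrite uu_leE //; lia.
apply/orP; right; apply: le_trans (ltW (covers_lt c2)) _.
by rewrite uu_leE.
Qed.

Lemma Z_chain : is_chain Z.
Proof.
have cxx : forall i j, (i.+1 < n)%N -> (j.+1 < n)%N -> (i < j)%N -> xx i >=< xx j.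
  move=> i j iN jN ij; have [_ _ c2 _] := xx_spec iN; have [_ c1 _ _] := xx_spec jN.
  apply/orP; left; apply: le_trans (ltW (covers_lt c2)) _.
  apply: le_trans (ltW (covers_lt c1)).
  by rewrite uu_leE //; lia.
move=> y1 y2 /Z_inv [[i iN ->]|[i iN ->]] /Z_inv [[j jN ->]|[j jN ->]].
- by apply: HRC; apply: uu_R.
- exact: cmp_uu_xx.
- by rewrite comparable_sym; apply: cmp_uu_xx.
- case: (ltngtP i j) => h; first exact: cxx.
  + by rewrite comparable_sym; apply: cxx.
  + by rewrite h comparablexx.
Qed.

Lemma Z_max : forall z, z \notin Z -> exists2 y, y \in Z & ~~ (z >=< y).
Proof.
move=> z zZ.
have nz : ~~ reducible z.
  by apply/negP => /R_uu [i iN E]; move: zZ; rewrite E Z_uu.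
have cl := lo_spec nz; have ch' := hi_spec nz.
have [i iN Ei] := R_uu (lo_R nz cl); have [j jN Ej] := R_uu (hi_R nz ch').
have ij : (i < j)%N by rewrite -(uu_ltE iN jN) -Ei -Ej (lt_trans (covers_lt cl) (covers_lt ch')).
rewrite Ei in cl; rewrite Ej in ch'.
case: (eqVneq j i.+1) => [Ej'|nj].
  subst j; exists (xx i); first exact: Z_xx.
  have [nx x1 x2 _] := xx_spec jN.
  apply: D_incomp nz nx cl ch' x1 x2 _.
  by apply: contraNneq zZ => ->; apply: Z_xx.
have i1 : (i.+1 < j)%N by lia.
have i1N : (i.+1 < n)%N by lia.
exists (uu i.+1); first exact: Z_uu.
have nzu : uu i.+1 != z by apply: contraNneq zZ => <-; apply: Z_uu.
rewrite /Order.comparable (Dge nz ch' nzu) (Dle nz cl nzu).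
by rewrite !uu_leE //; apply/norP; split; apply/negP; lia.
Qed.

Definition FF := [seq ([:: cc p.1 p.2], (uu p.1, uu p.2)) | p <- lex_pairs n].

Lemma flat_FF s : flatten (map fst [seq ([:: cc p.1 p.2], (uu p.1, uu p.2)) | p <- s]) =
  [seq cc p.1 p.2 | p <- s].
Proof. by elim: s => //= p s ->. Qed.

Lemma all_Zcs y : y \in Z ++ cs.
Proof.
case: (boolP (reducible y)) => ry.
  by have [i iN ->] := R_uu ry; rewrite mem_cat Z_uu.
have := D_csxs ry; rewrite mem_cat => /orP [H|/mapP [i]]; first by rewrite mem_cat H orbT.
rewrite mem_iota add0n => /andP [_ iN] ->.
by rewrite mem_cat Z_xx //; lia.
Qed.

Lemma uniq_Zcs : uniq (Z ++ cs).
Proof.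
apply/card_uniqP.
have -> : #|Z ++ cs| = #|T| by apply: eq_card => y; rewrite all_Zcs.
rewrite size_cat /Z size_zigzag ?size_map ?size_lex_pairs ?card_T ?card_DD; lia.
Qed.

Lemma rep : adjunct_rep Z FF.
Proof.
split; first by rewrite /FF flat_FF; exact: uniq_Zcs.
split; first by move=> y; rewrite /FF flat_FF all_Zcs.
split; first by split; [exact: Z_chain|exact: Z_max].
move=> s1 C a b s2 EF.
have : (C, (a, b)) \in FF by rewrite EF mem_cat in_cons eqxx orbT.
case/mapP => [[i j]]; rewrite mem_lex_pairs /= => /andP [ij jn] [EC Ea Eb].
have U := uniq_Zcs.
rewrite /cs -(flat_FF (lex_pairs n)) -/FF EF map_cat flatten_cat /= catA cat_uniq in U.
case/and3P: U => _ U _.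
have ccL : cc i j \notin Z ++ flatten (map fst s1).
  by apply: (hasPn U); rewrite EC mem_cat inE eqxx.
set L1 := [set y in Z ++ flatten (map fst s1)].
have RL : forall y, reducible y -> y \in L1.
  by move=> y /R_uu [k kN ->]; rewrite inE mem_cat Z_uu.
have iN := ltn_trans ij jn.
have [nc c1 c2] := cc_spec ij jn.
subst C a b.
split; [|split; [|split]].
- split => //; last exact: lattice_on_R.
  by move=> x y; rewrite !inE => /eqP -> /eqP ->; rewrite comparablexx.
- split; [exact: RL (uu_R iN)|exact: RL (uu_R jn)|exact: uu_lt|].
  apply/negP => /coversInP [_ _ _ H].
  case: (eqVneq j i.+1) => [Ej|nj].
    subst j; have [_ x1 x2 _] := xx_spec jn.
    move: (H (xx i)); rewrite (covers_lt x1) (covers_lt x2) inE mem_cat Z_xx //.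
    by move/(_ isT).
  have i1 : (i.+1 < j)%N by lia.
  have h1 : uu i.+1 \in L1 by apply: RL; apply: uu_R; lia.
  have h2 : uu i < uu i.+1 by apply: uu_lt; lia.
  have h3 : uu i.+1 < uu j by apply: uu_lt.
  by move: (H (uu i.+1) h1); rewrite h2 h3.
- move=> x y xL; rewrite inE => /eqP ->; apply: Dle nc c1 _.
  by apply: contraNneq ccL => <-; rewrite inE in xL.
- move=> x y xL; rewrite inE => /eqP ->; apply: Dge nc c2 _.
  by apply: contraNneq ccL => <-; rewrite inE in xL.
Qed.

Lemma main_concl :
  exists (u x : nat -> T) (c : nat -> nat -> T),
    [/\ [/\ (forall i j, (i < j < n)%N -> u i < u j),
            (forall y : T, reducible y <-> exists2 i, (i < n)%N & y = u i) &
            (forall i, (i < n.-1)%N -> covers (u i) (x i) /\ covers (x i) (u i.+1))],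
        adjunct_rep (zigzag n u x)
          [seq ([:: c p.1 p.2], (u p.1, u p.2)) | p <- lex_pairs n],
        (forall i, (i < n.-1)%N -> ~~ (x i >=< c i i.+1)) &
        [/\ #|T| = (2 * n - 1 + 'C(n, 2))%N,
            #|[set p : T * T | covers p.1 p.2]| = (2 * n - 2 + 2 * 'C(n, 2))%N &
            nullity [set: T] = Posz 'C(n, 2)]].
Proof.
exists uu, xx, cc; split.
- split.
  + by move=> i j /andP [ij jn]; exact: uu_lt.
  + by move=> y; split; [exact: R_uu|move=> [i iN ->]; exact: uu_R].
  + move=> i iN; have iN' : (i.+1 < n)%N by lia.
    by have [_ x1 x2 _] := xx_spec iN'.
- exact: rep.
- move=> i iN; have iN' : (i.+1 < n)%N by lia.
  have [nx x1 x2 xc] := xx_spec iN'; have [nc c1 c2] := cc_spec (ltnSn i) iN'.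
  exact: D_incomp nx nc x1 x2 c1 c2 xc.
- split => //.
  + rewrite card_T card_DD; lia.
  + have -> : #|[set p : T * T | covers p.1 p.2]| = #|cover_edges [set: T]| by [].
    rewrite card_edges card_DD; lia.
Qed.

End Rep.

Unset Implicit Arguments.
Theorem mainTheorem9 (d : Order.disp_t) (T : finLatticeType d) (n : nat) :
  (2 <= n)%N ->
  @fundamental_basic_block d T ->
  #|[set x : T | reducible x]| = n ->
  nullity [set: T] = Posz 'C(n, 2) ->
  exists (u x : nat -> T) (c : nat -> nat -> T),
    [/\ [/\ (forall i j, (i < j < n)%N -> u i < u j),
            (forall y : T, reducible y <-> exists2 i, (i < n)%N & y = u i) &
            (forall i, (i < n.-1)%N -> covers (u i) (x i) /\ covers (x i) (u i.+1))],
        adjunct_rep (zigzag n u x)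
          [seq ([:: c p.1 p.2], (u p.1, u p.2)) | p <- lex_pairs n],
        (forall i, (i < n.-1)%N -> ~~ (x i >=< c i i.+1)) &
        [/\ #|T| = (2 * n - 1 + 'C(n, 2))%N,
            #|[set p : T * T | covers p.1 p.2]| = (2 * n - 2 + 2 * 'C(n, 2))%N &
            nullity [set: T] = Posz 'C(n, 2)]].
Proof.
move=> n2 [HRC [HBB [C0 [steps [[_ [Hcov [[HC0 _] Hstep]]] Huniq]]]]] Hn Hnull.
have : (0 < #|[set x : T | reducible x]|)%N by rewrite Hn; lia.
case/card_gt0P => t0 _.
exact: (main_concl t0 Hcov HC0 Hstep n2 HRC HBB Huniq Hn Hnull).
Qed.
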